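(* For $n\ge 2$, let $\mathscr{C}_n=\langle Q,\{a,b\},\delta\rangle$ be the Černý automaton with $Q=\{0,1,\dots,n-1\}$, where $\delta(i,b)=i+1$ for $0\le i\le n-2$, $\delta(n-1,b)=0$, $\delta(i,a)=i$ for $0\le i\le n-2$, and $\delta(n-1,a)=0$. Then $sc(Syn(\mathscr{C}_n))=2^n-n$.
   Context: For a DFA $\mathscr{A}=\langle Q,\Sigma,\delta\rangle$ (total transition function, extended to words), $Syn(\mathscr{A})$ is the set of words $w\in\Sigma^*$ such that $\delta(q,w)=\delta(q',w)$ for all $q,q'\in Q$. The state complexity $sc(L)$ of a regular language $L$ is the number of states of the minimal (complete) DFA recognizing $L$. *)

(* Defs.v *)
From mathcomp Require Import all_boot.
Set Implicit Arguments. Unset Strict Implicit. Unset Printing Implicit Defensive.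

Definition delta_star (Q S : Type) (delta : Q -> S -> Q) (q : Q) (w : seq S) : Q :=
  foldl delta q w.

Definition Syn (Q S : Type) (delta : Q -> S -> Q) (w : seq S) : Prop :=
  forall q q' : Q, delta_star delta q w = delta_star delta q' w.

Record dfa (S : finType) := DFA {
  dfa_state : finType;
  dfa_trans : dfa_state -> S -> dfa_state;
  dfa_init : dfa_state;
  dfa_final : {set dfa_state} }.

Definition dfa_accepts (S : finType) (A : dfa S) (w : seq S) : bool :=
  delta_star (@dfa_trans S A) (dfa_init A) w \in dfa_final A.

Definition recognizes (S : finType) (A : dfa S) (L : seq S -> Prop) : Prop :=
  forall w, dfa_accepts A w <-> L w.

Definition state_complexity_is (S : finType) (L : seq S -> Prop) (k : nat) : Prop :=
  (exists A : dfa S, recognizes A L /\ #|dfa_state A| = k) /\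
  (forall A : dfa S, recognizes A L -> k <= #|dfa_state A|).

Definition letter_a : bool := true.
Definition letter_b : bool := false.

Definition cerny_trans (n : nat) (i : 'I_n) (c : bool) : 'I_n :=
  let n_gt0 : 0 < n := leq_ltn_trans (leq0n i) (ltn_ord i) in
  if c == letter_a then
    (if (i : nat) == n.-1 then Ordinal n_gt0 else i)
  else Ordinal (ltn_pmod i.+1 n_gt0).

(* Main.v *)
Require Import Defs.
From mathcomp Require Import all_boot zify.
Set Implicit Arguments. Unset Strict Implicit. Unset Printing Implicit Defensive.

Lemma mod2 n x : x < n + n -> x %% n = if x < n then x else x - n.
Proof.
move=> H; case: ifP => Hx; first by rewrite modn_small.
have -> : x = (x - n) + n by lia.
rewrite modnDr modn_small; lia.
Qed.

Lemma ord_gt0 n (i : 'I_n) : 0 < n.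
Proof. exact: leq_ltn_trans (leq0n i) (ltn_ord i). Qed.

Lemma trans_b n (i : 'I_n) : val (cerny_trans i false) = i.+1 %% n.
Proof. by []. Qed.

Lemma trans_a n (i : 'I_n) : val (cerny_trans i true) = if val i == n.-1 then 0 else val i.
Proof. by rewrite /cerny_trans /=; case: ifP. Qed.

Lemma star_cat n (i : 'I_n) w1 w2 :
  delta_star (@cerny_trans n) i (w1 ++ w2) =
  delta_star (@cerny_trans n) (delta_star (@cerny_trans n) i w1) w2.
Proof. by rewrite /delta_star foldl_cat. Qed.

Lemma star_b n (i : 'I_n) k : val (delta_star (@cerny_trans n) i (nseq k false)) = (i + k) %% n.
Proof.
elim: k i => [|k IH] i /=; first by rewrite addn0 modn_small.
rewrite /delta_star /= -/(delta_star _ _ _) IH trans_b modnDml; congr (_ %% _); lia.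
Qed.

Definition mw n j := nseq (n - j) false ++ true :: nseq j false.

Lemma star_m n (i : 'I_n) j : j < n ->
  val (delta_star (@cerny_trans n) i (mw n j)) = if val i == (j + n - 1) %% n then j else val i.
Proof.
move=> Hj; have Hi := ltn_ord i.
rewrite /mw star_cat.
set v := delta_star _ i _.
have Hv : val v = (i + (n - j)) %% n by rewrite star_b.
rewrite /delta_star /= -/(delta_star _ _ _) star_b trans_a Hv.
rewrite (@mod2 n (i + (n - j))); last by lia.
rewrite (@mod2 n (j + n - 1)); last by lia.
case: (ltnP (i + (n - j)) n) => H1; case: (ltnP (j + n - 1) n) => H2;
(case: ifP => /= H3; [move: H3 => H3 | move/negbT: H3 => H3]);
(case: ifP => /= H4; [move: H4 => H4 | move/negbT: H4 => H4]);
rewrite mod2; try (case: ifP => /= H5; [move: H5 => H5 | move/negbT: H5 => H5]); lia.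
Qed.

Definition img n (w : seq bool) (X : {set 'I_n}) : {set 'I_n} :=
  [set delta_star (@cerny_trans n) q w | q in X].

Lemma img_cat n w1 w2 (X : {set 'I_n}) : img (w1 ++ w2) X = img w2 (img w1 X).
Proof.
rewrite /img -imset_comp; apply: eq_imset => q /=; exact: star_cat.
Qed.

Lemma img_nil n (X : {set 'I_n}) : img [::] X = X.
Proof. by rewrite /img imset_id. Qed.

Lemma SynE n w : Syn (@cerny_trans n) w <-> #|img w [set: 'I_n]| <= 1.
Proof.
split.
- move=> H; apply/card_le1P => x /imsetP [q _ ->] y.
  apply/imsetP/eqP => [[q' _ ->]|->]; first by rewrite (H q q').
  by exists q.
- move/card_le1P => H q q'.
  have Hq : delta_star (@cerny_trans n) q w \in img w [set: 'I_n] by apply: imset_f.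
  have Hq' : delta_star (@cerny_trans n) q' w \in img w [set: 'I_n] by apply: imset_f.
  by have := H _ Hq (delta_star (@cerny_trans n) q' w); rewrite Hq' => /esym/eqP.
Qed.

Definition pre n (j : 'I_n) : 'I_n := Ordinal (ltn_pmod (j + n - 1) (ord_gt0 j)).
Definition modO n (j : 'I_n) k : 'I_n := Ordinal (ltn_pmod k (ord_gt0 j)).

Lemma mw_map n (j i : 'I_n) :
  delta_star (@cerny_trans n) i (mw n j) = if i == pre j then j else i.
Proof.
apply: val_inj; rewrite star_m //; rewrite /pre.
by case: ifP => /eqP H; case: ifP => /eqP H' //; [case: H'; apply: val_inj | case: H; rewrite H'].
Qed.

Lemma exists_gap n (X : {set 'I_n}) : X != set0 -> X != setT ->
  exists j, (j \in X) && (pre j \notin X).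
Proof.
move=> /set0Pn [x Hx] HT.
case: (boolP [exists j, (j \in X) && (pre j \notin X)]) => [/existsP //|/existsPn Hno]; exfalso.
have [y Hy] : exists y, y \notin X.
  case: (boolP [exists y, y \notin X]) => [/existsP //|/existsPn H]; move/eqP: HT; case.
  by apply/setP => z; rewrite inE; move: (H z); rewrite negbK.
have Hall : forall k, modO x (y + k) \notin X.
  elim=> [|k IH].
    by have -> : modO x (y + 0) = y by apply: val_inj; rewrite /= addn0 modn_small.
  apply/negP => Hk; move: (Hno (modO x (y + k.+1))); rewrite Hk /=.
  have -> : pre (modO x (y + k.+1)) = modO x (y + k).
    apply: val_inj => /=; have Hn := ord_gt0 x.
    have -> : (y + k.+1) %% n + n - 1 = (y + k.+1) %% n + (n - 1) by lia.
    rewrite modnDml.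
    have -> : y + k.+1 + (n - 1) = (y + k) + n by lia.
    by rewrite modnDr.
  by rewrite (negbTE IH).
move: (Hall (x + n - y)).
have -> : modO x (y + (x + n - y)) = x.
  apply: val_inj => /=; have Hy' := ltn_ord y; have Hx' := ltn_ord x.
  have -> : y + (x + n - y) = x + n by lia.
  by rewrite modnDr modn_small.
by rewrite Hx.
Qed.

Lemma img_mw n (j : 'I_n) (X : {set 'I_n}) : j \in X -> pre j \notin X ->
  img (mw n j) (pre j |: X) = X.
Proof.
move=> Hj Hp; apply/setP => x; apply/imsetP/idP.
- move=> [y]; rewrite in_setU1 mw_map => /orP [/eqP ->|Hy]; first by rewrite eqxx => ->.
  by case: ifP => [/eqP Hyp|_ ->] //; move: Hp; rewrite -Hyp Hy.
- move=> Hx; exists x; first by rewrite in_setU1 Hx orbT.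
  rewrite mw_map; case: ifP => // /eqP Hxp; by move: Hp; rewrite -Hxp Hx.
Qed.

Lemma reach n (X : {set 'I_n}) : X != set0 -> exists w, img w [set: 'I_n] = X.
Proof.
move Hk: (n - #|X|) => k; elim: k X Hk => [|k IH] X Hk HX.
  exists [::]; rewrite img_nil; apply/eqP; rewrite eq_sym eqEcard subsetT cardsT card_ord.
  lia.
have HT : X != setT.
  apply/negP => /eqP HXT; move: Hk; rewrite HXT cardsT card_ord; lia.
have /andP [Hj Hp] := (xchooseP (exists_gap HX HT)).
set j := xchoose _ in Hj Hp.
have HY1 : n - #|pre j |: X| = k.
  have Hc : #|X| <= n by have := subset_leq_card (subsetT X); rewrite cardsT card_ord.
  rewrite cardsU1 Hp /=; move: Hk Hc; set c := #|X|; lia.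
have HY2 : pre j |: X != set0 by apply/set0Pn; exists (pre j); rewrite setU11.
have [w Hw] := IH _ HY1 HY2.
exists (w ++ mw n j); by rewrite img_cat Hw img_mw.
Qed.

Fixpoint Mw n k : seq bool := if k is k'.+1 then Mw n k' ++ mw n k'.+2 else [::].

Lemma Mw_map n (i : 'I_n) k : k.+1 < n ->
  val (delta_star (@cerny_trans n) i (Mw n k)) = if val i == 0 then 0 else maxn i k.+1.
Proof.
have Hi := ltn_ord i.
elim: k => [|k IH] Hk /=.
  by case: ifP => /eqP H; lia.
rewrite star_cat star_m; last lia.
rewrite IH; last lia.
rewrite (@mod2 n (k.+2 + n - 1)); last lia.
rewrite ltnNge (_ : n <= k.+2 + n - 1) /=; last lia.
have [H0|H0] := eqVneq (val i) 0 => /=;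
(case: ifP => /= H3; [move: H3 => H3 | move/negbT: H3 => H3]); lia.
Qed.

Definition sw n (x : 'I_n) := nseq (n - x) false ++ Mw n (n - 2).

Lemma sw_map n (x y : 'I_n) : 1 < n ->
  val (delta_star (@cerny_trans n) y (sw x)) = if y == x then 0 else n - 1.
Proof.
move=> Hn; have Hx := ltn_ord x; have Hy := ltn_ord y.
rewrite /sw star_cat Mw_map; last lia.
set v := delta_star _ y _.
have Hv : val v = (y + (n - x)) %% n by rewrite star_b.
rewrite mod2 in Hv; last lia.
have -> : (n - 2).+1 = n - 1 by lia.
have Hv' := ltn_ord v.
have [Heq|Hne] := eqVneq y x.
  rewrite Heq in Hv.
  have -> : val v = 0 by move: Hv; case: ifP => /= H; [move: H => H | move/negbT: H => H]; lia.
  by [].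
have Hne' : (y : nat) != x by apply/negP => /eqP /val_inj /eqP; rewrite (negbTE Hne).
move: Hv; case: ifP => /= H; [move: H => H | move/negbT: H => H] => Hv;
case: ifP => /= H'; [move: H' => H' | move/negbT: H' => H' | move: H' => H' | move/negbT: H' => H']; lia.
Qed.

Lemma sep n (X Y : {set 'I_n}) x : 1 < n -> x \in X -> x \notin Y -> 1 < #|X| -> Y != set0 ->
  exists u, (1 < #|img u X|) && (#|img u Y| <= 1).
Proof.
move=> Hn HxX HxY HX /set0Pn [y0 Hy0].
have [y Hy] : exists y, y \in X :\ x.
  apply/set0Pn; rewrite -card_gt0; move: HX; rewrite (cardsD1 x X) HxX; lia.
move: Hy; rewrite in_setD1 => /andP [Hyx HyX].
exists (sw x); apply/andP; split.
  have Hd : delta_star (@cerny_trans n) x (sw x) != delta_star (@cerny_trans n) y (sw x).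
    apply/negP => /eqP /(congr1 val); rewrite !sw_map // eqxx (negbTE Hyx); lia.
  have := subset_leq_card (_ : [set delta_star (@cerny_trans n) x (sw x);
                                    delta_star (@cerny_trans n) y (sw x)] \subset img (sw x) X).
  rewrite cards2 Hd; apply.
  by apply/subsetP => z; rewrite !inE => /orP [] /eqP ->; apply: imset_f.
have Hs : img (sw x) Y \subset [set delta_star (@cerny_trans n) y0 (sw x)].
  apply/subsetP => z /imsetP [q Hq ->]; rewrite inE; apply/eqP/val_inj.
  rewrite !sw_map //.
  have -> : (q == x) = false by apply/negP => /eqP Hq'; move: HxY; rewrite -Hq' Hq.
  have -> : (y0 == x) = false by apply/negP => /eqP Hq'; move: HxY; rewrite -Hq' Hy0.
  by [].
by have := subset_leq_card Hs; rewrite cards1.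
Qed.

Lemma distinguish n (X Y : {set 'I_n}) s0 : 1 < n ->
  (1 < #|X|) || (X == [set s0]) -> (1 < #|Y|) || (Y == [set s0]) ->
  (forall u, (#|img u X| <= 1) = (#|img u Y| <= 1)) -> X = Y.
Proof.
move=> Hn PX PY H.
have H0 := H [::]; rewrite !img_nil in H0.
case/orP: PX => [HX|/eqP HX]; case/orP: PY => [HY|/eqP HY].
- apply/eqP; rewrite eqEsubset; apply/andP; split; apply/negPn/negP => /subsetPn [x Hx1 Hx2].
    have [|u /andP [Hu1 Hu2]] := sep Hn Hx1 Hx2 HX.
      by apply/set0Pn; apply/card_gt0P; lia.
    by move: (H u); rewrite Hu2 leqNgt Hu1.
  have [|u /andP [Hu1 Hu2]] := sep Hn Hx1 Hx2 HY.
    by apply/set0Pn; apply/card_gt0P; lia.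
  by move: (H u); rewrite Hu2 leqNgt Hu1.
- by move: H0; rewrite HY cards1 leqnn leqNgt HX.
- by move: H0; rewrite HX cards1 leqnn leqNgt HY.
- by rewrite HX HY.
Qed.

Definition Pst m (X : {set 'I_m.+1}) : bool := (1 < #|X|) || (X == [set ord0]).
Definition St m := {X : {set 'I_m.+1} | Pst X}.
Definition normS m (X : {set 'I_m.+1}) := if 1 < #|X| then X else [set ord0].

Lemma Pst_norm m (X : {set 'I_m.+1}) : Pst (normS X).
Proof. by rewrite /Pst /normS; case: ifP => [->|_] //; rewrite eqxx orbT. Qed.

Definition stepS m (s : St m) (c : bool) : St m :=
  exist _ (normS (img [:: c] (val s))) (Pst_norm _).
Definition initS m : St m := exist _ (normS [set: 'I_m.+1]) (Pst_norm _).
Definition finalS m : {set St m} := [set s | val s == [set ord0]].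
Definition Aut m : dfa bool := @DFA bool (St m) (@stepS m) (initS m) (finalS m).

Lemma normS_img m w (Z : {set 'I_m.+1}) : normS (img w (normS Z)) = normS (img w Z).
Proof.
rewrite {2}/normS; case HZ: (1 < #|Z|) => //; rewrite /normS.
have -> : img w [set ord0] = [set delta_star (@cerny_trans m.+1) ord0 w] by rewrite /img imset_set1.
rewrite cards1 /=.
have := leq_imset_card (fun q => delta_star (@cerny_trans m.+1) q w) Z.
rewrite -/(img w Z) => H.
case: ifP => // Hb; move/negbT: HZ => HZ; move: Hb => Hb; exfalso.
move: HZ Hb H; set a := #|Z|; set b := #|img w Z|; lia.
Qed.

Lemma normS_id m (X : {set 'I_m.+1}) : Pst X -> normS X = X.
Proof. by rewrite /Pst /normS => /orP [->|/eqP ->] //; case: ifP. Qed.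

Lemma Aut_star m w (s : St m) :
  val (delta_star (@stepS m) s w) = normS (img w (val s)).
Proof.
elim: w s => [|c w IH] s /=; first by rewrite img_nil normS_id //; apply: valP.
rewrite /delta_star /= -/(delta_star _ _ _) IH /= normS_img.
by rewrite -img_cat.
Qed.

Lemma normS_eq m (Y : {set 'I_m.+1}) : (normS Y == [set ord0]) = (#|Y| <= 1).
Proof.
rewrite /normS; case: ifP => H; rewrite leqNgt H /=; last by rewrite eqxx.
by apply/negP => /eqP HY; move: H; rewrite HY cards1.
Qed.

Lemma Aut_rec m : recognizes (Aut m) (Syn (@cerny_trans m.+1)).
Proof.
move=> w; rewrite SynE /dfa_accepts /= /finalS inE Aut_star /= normS_img normS_eq.
by split => /idP.
Qed.

Lemma card_St m : #|{: St m}| = 2 ^ m.+1 - m.+1.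
Proof.
rewrite card_sig -cardsE.
set A := [set X | Pst X].
have HC := cardsC A.
have Hall : #|{set 'I_m.+1}| = 2 ^ m.+1.
  by rewrite -cardsT -powersetT card_powerset cardsT card_ord.
pose g (i : 'I_m.+1) : {set 'I_m.+1} := if i == ord0 then set0 else [set i].
have ginj : injective g.
  move=> i j; rewrite /g.
  case: (eqVneq i ord0) => [->|Hi]; case: (eqVneq j ord0) => [->|Hj] //.
  - by move/setP/(_ j); rewrite !inE eqxx.
  - by move/setP/(_ i); rewrite !inE eqxx.
  - by move/set1_inj.
have HcA : ~: A = g @: setT.
  apply/setP => X; rewrite !inE; apply/idP/imsetP.
  - rewrite /Pst negb_or -leqNgt => /andP [H1 H2].
    case: (posnP #|X|) => H0.
      by exists ord0 => //; rewrite /g eqxx; apply/eqP; rewrite -cards_eq0 H0.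
    have /cards1P [x Hx] : #|X| == 1 by rewrite eqn_leq H1.
    exists x => //; rewrite /g; case: ifP => // /eqP Hx0; move: H2; by rewrite Hx Hx0 eqxx.
  - move=> [i _ ->]; rewrite /Pst /g; case: ifP => [_|Hi].
      rewrite cards0 /=; apply/eqP => /setP/(_ ord0); by rewrite !inE eqxx.
    rewrite cards1 /=; apply/negP => /eqP/set1_inj /eqP; by rewrite Hi.
have : #|~: A| = m.+1 by rewrite HcA card_imset // cardsT card_ord.
move=> Hc; rewrite Hc in HC; move: HC; rewrite Hall; lia.
Qed.

Lemma reachb n (X : {set 'I_n}) : X != set0 -> exists w, img w [set: 'I_n] == X.
Proof. by move=> /reach [w Hw]; exists w; rewrite Hw. Qed.

Lemma St_ne m (s : St m) : val s != set0.
Proof.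
case: s => X /= /orP [H|/eqP ->].
  by apply/set0Pn/card_gt0P; lia.
by apply/set0Pn; exists ord0; rewrite inE.
Qed.

Theorem proposition2 (n : nat) (hn : 2 <= n) :
  state_complexity_is (Syn (@cerny_trans n)) (2 ^ n - n).
Proof.
case: n hn => [//|m] hn.
split.
  by exists (Aut m); split; [exact: Aut_rec | exact: card_St].
move=> A HA; rewrite -card_St.
pose ws (s : St m) := xchoose (reachb (St_ne s)).
have Hws : forall s, img (ws s) [set: 'I_m.+1] = val s by move=> s; exact: (eqP (xchooseP (reachb (St_ne s)))).
pose f (s : St m) := delta_star (@dfa_trans bool A) (dfa_init A) (ws s).
apply: (@leq_card _ _ f) => s t Hst.
apply: val_inj; apply: (@distinguish _ _ _ ord0 hn (valP s) (valP t)).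
move=> u.
have E s0 : dfa_accepts A (ws s0 ++ u) = (#|img u (val s0)| <= 1).
  apply/idP/idP => [/HA /SynE|H]; first by rewrite img_cat Hws.
  by apply/HA/SynE; rewrite img_cat Hws.
rewrite -!E /dfa_accepts /delta_star !foldl_cat.
by move: Hst; rewrite /f /delta_star => ->.
Qed.
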